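(* Let $M \ge 2$ be an integer and let $\alpha \in (0,1]$ satisfy $2\lceil 1/\alpha\rceil \le M$ (equivalently, the feasible set below is nonempty). Consider the optimization problem $$\text{maximize } \Bigl(-\sum_{i=1}^M s_i\log s_i + \sum_{i=1}^M t_i \log t_i\Bigr)$$ over $(s_1,t_1,\ldots,s_M,t_M)\in\mathbb{R}^{2M}$ subject to $s_i,t_i\ge 0$, $s_i+t_i\le\alpha$, $s_i t_i = 0$ for all $i\in\{1,\ldots,M\}$, and $\sum_{i=1}^M s_i = \sum_{i=1}^M t_i = 1$. Then the maximum is attained and equals $$g(\alpha) = \log\Bigl(M - \Bigl\lceil \frac1\alpha\Bigr\rceil\Bigr) + \alpha\Bigl\lfloor\frac1\alpha\Bigr\rfloor\log\alpha + \Bigl(1-\alpha\Bigl\lfloor\frac1\alpha\Bigr\rfloor\Bigr)\log\Bigl(1-\alpha\Bigl\lfloor\frac1\alpha\Bigr\rfloor\Bigr).$$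
   Context: Logarithms are natural, with the convention $0\log 0 = 0$. *)

(* Defs.v *)
From Stdlib Require Import Reals Lra Lia ZArith.
Open Scope R_scope.

Definition plogp (x : R) : R := if Req_EM_T x 0 then 0 else x * ln x.

Definition floorZ (x : R) : Z := (up x - 1)%Z.
Definition ceilZ (x : R) : Z := (- floorZ (- x))%Z.

Fixpoint rsum (f : nat -> R) (n : nat) : R :=
  match n with
  | O => 0
  | S k => rsum f k + f k
  end.

(* feasible set; coordinates indexed 0..M-1 *)
Definition feasible (M : nat) (alpha : R) (s t : nat -> R) : Prop :=
  (forall i, (i < M)%nat ->
     0 <= s i /\ 0 <= t i /\ s i + t i <= alpha /\ s i * t i = 0) /\
  rsum s M = 1 /\ rsum t M = 1.

Definition objective (M : nat) (s t : nat -> R) : R :=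
  rsum (fun i => - plogp (s i) + plogp (t i)) M.

Definition gval (M : nat) (alpha : R) : R :=
  let k := IZR (floorZ (1 / alpha)) in
  ln (IZR (Z.of_nat M - ceilZ (1 / alpha))) + alpha * k * ln alpha
  + plogp (1 - alpha * k).

(* Main.v *)
Require Import Defs.
From Stdlib Require Import Reals ZArith.
From Stdlib Require Import Lra Lia.
Open Scope R_scope.

Lemma ln_le_m1 x : 0 < x -> ln x <= x - 1.
Proof. intro H. pose proof (exp_ineq1_le (ln x)). rewrite exp_ln in H0 by lra. lra. Qed.

Lemma ln_le' x y : 0 < x -> x <= y -> ln x <= ln y.
Proof. intros H1 H2. destruct (Req_dec x y) as [->|Hn]; [lra|].
  left. apply ln_increasing; lra. Qed.

Lemma plogp0 : plogp 0 = 0.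
Proof. unfold plogp. destruct (Req_EM_T 0 0); lra. Qed.

Lemma plogp_pos x : 0 < x -> plogp x = x * ln x.
Proof. intro H. unfold plogp. destruct (Req_EM_T x 0); [lra|auto]. Qed.

Lemma plogp1 : plogp 1 = 0.
Proof. rewrite plogp_pos by lra. rewrite ln_1. ring. Qed.

Lemma tangent x y : 0 < x -> 0 <= y -> x * ln x + (ln x + 1) * (y - x) <= plogp y.
Proof.
  intros Hx Hy. destruct (Req_dec y 0) as [->|Hn].
  - rewrite plogp0. nra.
  - rewrite plogp_pos by lra.
    assert (H : ln (x / y) <= x / y - 1) by (apply ln_le_m1; apply Rdiv_lt_0_compat; lra).
    unfold Rdiv in H. rewrite ln_mult in H by (try apply Rinv_0_lt_compat; lra).
    rewrite ln_Rinv in H by lra.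
    assert (H2 : y * (ln x + - ln y) <= y * (x * / y - 1)) by (apply Rmult_le_compat_l; lra).
    replace (y * (x * / y - 1)) with (x - y) in H2 by (field; lra).
    nra.
Qed.

Lemma superadd a b : 0 <= a -> 0 <= b -> plogp a + plogp b <= plogp (a + b).
Proof.
  intros Ha Hb. destruct (Req_dec a 0) as [->|Ha'].
  { rewrite plogp0. replace (0 + b) with b by ring. lra. }
  destruct (Req_dec b 0) as [->|Hb'].
  { rewrite plogp0. replace (a + 0) with a by ring. lra. }
  rewrite !plogp_pos by lra.
  assert (ln a <= ln (a+b)) by (apply ln_le'; lra).
  assert (ln b <= ln (a+b)) by (apply ln_le'; lra).
  assert (a * ln a <= a * ln (a+b)) by (apply Rmult_le_compat_l; lra).
  assert (b * ln b <= b * ln (a+b)) by (apply Rmult_le_compat_l; lra).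
  lra.
Qed.

Lemma wrap_aux a b : 0 <= a -> a <= b -> b <= 1 -> 1 <= a + b ->
  plogp a + plogp b <= plogp (a + b - 1).
Proof.
  intros Ha Hab Hb1 Hs. destruct (Req_dec a 0) as [->|Ha'].
  { assert (b = 1) by lra. subst. rewrite plogp0, plogp1.
    replace (0 + 1 - 1) with 0 by ring. rewrite plogp0. lra. }
  pose proof (tangent a (a + b - 1) ltac:(lra) ltac:(lra)).
  pose proof (tangent b 1 ltac:(lra) ltac:(lra)).
  rewrite plogp1 in H0.
  rewrite (plogp_pos a) by lra. rewrite (plogp_pos b) by lra.
  assert (ln a <= ln b) by (apply ln_le'; lra).
  assert (0 <= (1 - b) * (ln b - ln a)) by (apply Rmult_le_pos; lra).
  nra.
Qed.

Lemma wrap a b : 0 <= a <= 1 -> 0 <= b <= 1 -> 1 <= a + b ->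
  plogp a + plogp b <= plogp (a + b - 1).
Proof.
  intros Ha Hb Hs. destruct (Rle_dec a b).
  - apply wrap_aux; lra.
  - rewrite Rplus_comm, (Rplus_comm a b). apply wrap_aux; lra.
Qed.

Lemma frac_ind (u : nat -> R) n : (forall i, (i < n)%nat -> 0 <= u i <= 1) ->
  exists m : Z, 0 <= rsum u n - IZR m < 1 /\
    rsum (fun i => plogp (u i)) n <= plogp (rsum u n - IZR m).
Proof.
  induction n as [|n IH]; intro Hu.
  - exists 0%Z. simpl. replace (0 - 0) with 0 by ring. rewrite plogp0. lra.
  - destruct IH as [m [Hm1 Hm2]]. { intros; apply Hu; lia. }
    assert (Hn : 0 <= u n <= 1) by (apply Hu; lia).
    simpl. destruct (Rlt_dec (rsum u n - IZR m + u n) 1).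
    + exists m. split; [lra|].
      pose proof (superadd (rsum u n - IZR m) (u n) ltac:(lra) ltac:(lra)).
      replace (rsum u n + u n - IZR m) with (rsum u n - IZR m + u n) by ring. lra.
    + exists (m + 1)%Z. rewrite plus_IZR. split; [lra|].
      pose proof (wrap (rsum u n - IZR m) (u n) ltac:(lra) ltac:(lra) ltac:(lra)).
      replace (rsum u n + u n - (IZR m + 1)) with (rsum u n - IZR m + u n - 1) by ring. lra.
Qed.

Lemma rsum_ext f g n : (forall i, (i < n)%nat -> f i = g i) -> rsum f n = rsum g n.
Proof. induction n; intro H; simpl; auto. rewrite IHn by (intros; apply H; lia).
  rewrite H by lia. auto. Qed.
Lemma rsum_le f g n : (forall i, (i < n)%nat -> f i <= g i) -> rsum f n <= rsum g n.
Proof. induction n; intro H; simpl; [lra|].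
  pose proof (IHn ltac:(intros; apply H; lia)). pose proof (H n ltac:(lia)). lra. Qed.
Lemma rsum_plus f g n : rsum (fun i => f i + g i) n = rsum f n + rsum g n.
Proof. induction n; simpl; [ring|]. rewrite IHn. ring. Qed.
Lemma rsum_scal c f n : rsum (fun i => c * f i) n = c * rsum f n.
Proof. induction n; simpl; [ring|]. rewrite IHn. ring. Qed.
Lemma rsum_const c n : rsum (fun _ => c) n = INR n * c.
Proof. induction n; [simpl; ring|]. rewrite S_INR. change (rsum (fun _ => c) n + c = (INR n + 1) * c). rewrite IHn. ring. Qed.
Lemma rsum_opp f n : rsum (fun i => - f i) n = - rsum f n.
Proof. induction n; simpl; [ring|]. rewrite IHn. ring. Qed.
Lemma rsum_split f a b : rsum f (a + b) = rsum f a + rsum (fun i => f (a + i)%nat) b.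
Proof. induction b; simpl. - rewrite Nat.add_0_r. ring. - rewrite Nat.add_succ_r. simpl. rewrite IHb. ring. Qed.

Definition ind (x : R) : R := if Rlt_dec 0 x then 1 else 0.

Lemma cnt_nat f n : exists m : nat, rsum (fun i => ind (f i)) n = INR m.
Proof. induction n; simpl. - exists 0%nat. auto.
  - destruct IHn as [m Hm]. rewrite Hm. unfold ind. destruct (Rlt_dec 0 (f n)).
    + exists (S m). rewrite (S_INR m). ring.
    + exists m. ring. Qed.

Lemma floor_spec x : IZR (floorZ x) <= x < IZR (floorZ x) + 1.
Proof. unfold floorZ. destruct (archimed x). rewrite minus_IZR. lra. Qed.
Lemma ceil_spec x : x <= IZR (ceilZ x) < x + 1.
Proof. unfold ceilZ, floorZ. destruct (archimed (- x)). rewrite opp_IZR, minus_IZR. lra. Qed.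

Lemma partB (M : nat) (alpha : R) (t : nat -> R) : 0 < alpha ->
  (forall i, (i < M)%nat -> 0 <= t i <= alpha) -> rsum t M = 1 ->
  rsum (fun i => plogp (t i)) M <=
  alpha * IZR (floorZ (1 / alpha)) * ln alpha + plogp (1 - alpha * IZR (floorZ (1 / alpha))).
Proof.
  intros Ha Ht Hs.
  assert (Hid : forall x, 0 <= x -> plogp x = x * ln alpha + alpha * plogp (x / alpha)).
  { intros x Hx. destruct (Req_dec x 0) as [->|Hn].
    - unfold Rdiv. rewrite !Rmult_0_l, plogp0. ring.
    - rewrite !plogp_pos by (try apply Rdiv_lt_0_compat; lra).
      unfold Rdiv. rewrite ln_mult by (try apply Rinv_0_lt_compat; lra).
      rewrite ln_Rinv by lra. field. lra. }
  destruct (frac_ind (fun i => t i / alpha) M) as [m [Hm1 Hm2]].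
  { intros i Hi. destruct (Ht i Hi). split.
    - unfold Rdiv. apply Rmult_le_pos; [lra|]. left; apply Rinv_0_lt_compat; lra.
    - apply (Rmult_le_reg_r alpha); [lra|]. unfold Rdiv. rewrite Rmult_assoc, Rinv_l by lra. lra. }
  assert (Hsu : rsum (fun i => t i / alpha) M = 1 / alpha).
  { rewrite (rsum_ext _ (fun i => / alpha * t i)) by (intros; unfold Rdiv; ring).
    rewrite rsum_scal, Hs. unfold Rdiv. ring. }
  rewrite Hsu in Hm1, Hm2.
  pose proof (floor_spec (1 / alpha)) as [Hf1 Hf2].
  set (k := floorZ (1 / alpha)) in *.
  assert (m = k).
  { assert (m < k + 1)%Z by (apply lt_IZR; rewrite plus_IZR; simpl; lra).
    assert (k < m + 1)%Z by (apply lt_IZR; rewrite plus_IZR; simpl; lra). lia. }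
  subst m.
  rewrite (rsum_ext _ (fun i => ln alpha * t i + alpha * plogp (t i / alpha)))
    by (intros i Hi; rewrite Hid by (apply Ht; auto); ring).
  rewrite rsum_plus, rsum_scal, rsum_scal, Hs.
  assert (Hk : alpha * IZR k <= 1).
  { apply (Rmult_le_compat_l alpha) in Hf1; [|lra].
    replace (alpha * (1 / alpha)) with 1 in Hf1 by (field; lra). lra. }
  rewrite (Hid (1 - alpha * IZR k)) by lra.
  replace ((1 - alpha * IZR k) / alpha) with (1 / alpha - IZR k) by (field; lra).
  assert (alpha * rsum (fun i => plogp (t i / alpha)) M <= alpha * plogp (1 / alpha - IZR k))
    by (apply Rmult_le_compat_l; lra).
  lra.
Qed.

Lemma partA (M : nat) (N : R) (s : nat -> R) : 0 < N ->
  (forall i, (i < M)%nat -> 0 <= s i) -> rsum s M = 1 ->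
  rsum (fun i => ind (s i)) M <= N ->
  rsum (fun i => - plogp (s i)) M <= ln N.
Proof.
  intros HN Hs Hsum Hc.
  assert (H : rsum (fun i => - plogp (s i)) M <=
              rsum (fun i => ln N * s i + (/ N * ind (s i) + - s i)) M).
  { apply rsum_le. intros i Hi. specialize (Hs i Hi). unfold ind.
    destruct (Rlt_dec 0 (s i)).
    - rewrite plogp_pos by lra.
      assert (Hl : ln (/ (N * s i)) <= / (N * s i) - 1)
        by (apply ln_le_m1; apply Rinv_0_lt_compat; apply Rmult_lt_0_compat; lra).
      rewrite ln_Rinv, ln_mult in Hl by (try apply Rmult_lt_0_compat; lra).
      assert (H2 : s i * (- (ln N + ln (s i))) <= s i * (/ (N * s i) - 1))
        by (apply Rmult_le_compat_l; lra).
      replace (s i * (/ (N * s i) - 1)) with (/ N * 1 - s i) in H2 by (field; lra).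
      lra.
    - assert (s i = 0) by lra. rewrite H, plogp0. lra. }
  rewrite rsum_plus, rsum_plus, rsum_scal, rsum_scal, !rsum_opp, Hsum in H.
  assert (/ N * rsum (fun i => ind (s i)) M <= / N * N)
    by (apply Rmult_le_compat_l; [left; apply Rinv_0_lt_compat|]; lra).
  rewrite Rinv_l in H0 by lra. rewrite rsum_opp. lra.
Qed.

Lemma upper (M : nat) (alpha : R) (hM : (2 <= M)%nat) (ha0 : 0 < alpha) (ha1 : alpha <= 1)
  (hfeas : (2 * ceilZ (1 / alpha) <= Z.of_nat M)%Z) (s t : nat -> R) :
  feasible M alpha s t -> objective M s t <= gval M alpha.
Proof.
  intros [Hf [Hs Ht]]. unfold objective, gval. cbv zeta.
  rewrite rsum_plus.
  pose proof (partB M alpha t ha0 ltac:(intros i Hi; destruct (Hf i Hi) as [? [? [? ?]]]; lra) Ht).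
  destruct (cnt_nat s M) as [ms Hms]. destruct (cnt_nat t M) as [mt Hmt].
  assert (H1 : rsum t M <= alpha * rsum (fun i => ind (t i)) M).
  { rewrite <- rsum_scal. apply rsum_le. intros i Hi. destruct (Hf i Hi) as [? [? [? ?]]].
    unfold ind. destruct (Rlt_dec 0 (t i)); lra. }
  assert (H2 : rsum (fun i => ind (s i) + ind (t i)) M <= rsum (fun _ => 1) M).
  { apply rsum_le. intros i Hi. destruct (Hf i Hi) as [? [? [? ?]]].
    unfold ind. destruct (Rlt_dec 0 (t i)); destruct (Rlt_dec 0 (s i)); try lra.
    assert (0 < s i * t i) by (apply Rmult_lt_0_compat; lra). lra. }
  rewrite rsum_plus, rsum_const, Hms, Hmt in H2. rewrite Ht, Hmt in H1.
  pose proof (ceil_spec (1 / alpha)) as [Hc1 Hc2].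
  set (c := ceilZ (1 / alpha)) in *.
  assert (Hia : 1 <= 1 / alpha).
  { apply (Rmult_le_reg_r alpha); [lra|]. replace (1 / alpha * alpha) with 1 by (field; lra). lra. }
  assert (Hmt' : 1 / alpha <= INR mt).
  { apply (Rmult_le_reg_r alpha); [lra|]. replace (1 / alpha * alpha) with 1 by (field; lra). lra. }
  rewrite INR_IZR_INZ in Hmt'.
  assert (c < Z.of_nat mt + 1)%Z by (apply lt_IZR; rewrite plus_IZR; simpl; lra).
  assert (0 < c)%Z by (apply lt_IZR; simpl; lra).
  assert (ms + mt <= M)%nat by (apply INR_le; rewrite plus_INR; lra).
  assert (HN : INR ms <= IZR (Z.of_nat M - c)).
  { rewrite INR_IZR_INZ. apply IZR_le. lia. }
  assert (HN0 : 0 < IZR (Z.of_nat M - c)) by (apply IZR_lt; lia).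
  pose proof (partA M _ s HN0 ltac:(intros i Hi; destruct (Hf i Hi) as [? [? [? ?]]]; lra) Hs
    ltac:(rewrite Hms; lra)).
  lra.
Qed.

Lemma rsum_split' f a n : (a <= n)%nat ->
  rsum f n = rsum f a + rsum (fun i => f (a + i)%nat) (n - a).
Proof. intro H. rewrite <- rsum_split. f_equal. lia. Qed.

Theorem lemma1 (M : nat) (alpha : R)
  (hM : (2 <= M)%nat) (ha0 : 0 < alpha) (ha1 : alpha <= 1)
  (hfeas : (2 * ceilZ (1 / alpha) <= Z.of_nat M)%Z) :
  (exists s t : nat -> R, feasible M alpha s t /\ objective M s t = gval M alpha) /\
  (forall s t : nat -> R, feasible M alpha s t -> objective M s t <= gval M alpha).
Proof.
  split; [|intros s t; apply upper; auto].
  pose proof (floor_spec (1 / alpha)) as [Hf1 Hf2].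
  pose proof (ceil_spec (1 / alpha)) as [Hc1 Hc2].
  assert (Hia : 1 <= 1 / alpha).
  { apply (Rmult_le_reg_r alpha); [lra|]. replace (1 / alpha * alpha) with 1 by (field; lra). lra. }
  unfold gval. cbv zeta.
  set (kz := floorZ (1 / alpha)) in *. set (cz := ceilZ (1 / alpha)) in *.
  assert (0 < kz)%Z by (apply lt_IZR; simpl; lra).
  assert (kz <= cz)%Z by (apply le_IZR; lra).
  assert (cz <= kz + 1)%Z by (assert (cz < kz + 2)%Z by (apply lt_IZR; rewrite plus_IZR; simpl; lra); lia).
  set (kn := Z.to_nat kz). set (cn := Z.to_nat cz).
  assert (Hk : kz = Z.of_nat kn) by (unfold kn; rewrite Z2Nat.id; lia).
  assert (Hc : cz = Z.of_nat cn) by (unfold cn; rewrite Z2Nat.id; lia).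
  rewrite Hk, Hc in *. rewrite <- !INR_IZR_INZ in *.
  assert (HMc : (cn <= M)%nat) by lia.
  rewrite <- Nat2Z.inj_sub by lia. rewrite <- INR_IZR_INZ.
  assert (Hak : alpha * INR kn <= 1).
  { apply (Rmult_le_compat_l alpha) in Hf1; [|lra].
    replace (alpha * (1 / alpha)) with 1 in Hf1 by (field; lra). lra. }
  assert (Hak2 : 1 < alpha * INR kn + alpha).
  { apply (Rmult_lt_compat_l alpha) in Hf2; [|lra].
    replace (alpha * (1 / alpha)) with 1 in Hf2 by (field; lra). lra. }
  assert (Heq : cn = kn -> alpha * INR kn = 1).
  { intro E. rewrite E in Hc1. apply (Rmult_le_compat_l alpha) in Hc1; [|lra].
    replace (alpha * (1 / alpha)) with 1 in Hc1 by (field; lra). lra. }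
  assert (HNc : INR cn <= INR (M - cn)) by (apply le_INR; lia).
  assert (HN1 : 1 <= alpha * INR (M - cn)).
  { apply (Rmult_le_compat_l alpha) in Hc1; [|lra].
    replace (alpha * (1 / alpha)) with 1 in Hc1 by (field; lra).
    assert (alpha * INR cn <= alpha * INR (M - cn)) by (apply Rmult_le_compat_l; lra). lra. }
  set (N := INR (M - cn)) in *.
  assert (HN0 : 0 < N) by nra.
  assert (HsN : 1 / N <= alpha).
  { apply (Rmult_le_reg_r N); [lra|]. replace (1 / N * N) with 1 by (field; lra). lra. }
  assert (HsN0 : 0 < 1 / N) by (apply Rdiv_lt_0_compat; lra).
  set (r := 1 - alpha * INR kn).
  exists (fun i => if (i <? cn)%nat then 0 else 1 / N).
  exists (fun i => if (i <? kn)%nat then alpha else if (i =? kn)%nat then r else 0).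
  split.
  - split; [|split].
    + intros i Hi. destruct (Nat.ltb_spec i cn); destruct (Nat.ltb_spec i kn);
        destruct (Nat.eqb_spec i kn); unfold r in *; try lia; try (repeat split; lra).
      subst i. assert (Ecn : cn = kn) by lia. specialize (Heq Ecn). repeat split; try lra.
      rewrite Heq. ring.
    + rewrite (rsum_split' _ cn M HMc).
      rewrite (rsum_ext _ (fun _ => 0) cn) by (intros i Hi; destruct (Nat.ltb_spec i cn); lia || auto).
      rewrite (rsum_ext _ (fun _ => 1 / N) (M - cn)) by (intros i Hi; destruct (Nat.ltb_spec (cn + i) cn); lia || auto).
      rewrite !rsum_const. fold N. field. lra.
    + assert (Hkm : (kn <= M)%nat) by lia.
      rewrite (rsum_split' _ kn M Hkm).
      rewrite (rsum_split' _ 1 (M - kn)) by lia.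
      rewrite (rsum_ext _ (fun _ => alpha) kn) by (intros i Hi; destruct (Nat.ltb_spec i kn); lia || auto).
      rewrite (rsum_ext (fun i => _) (fun _ => 0) (M - kn - 1)).
      2:{ intros i Hi. destruct (Nat.ltb_spec (kn + (1 + i)) kn); [lia|].
          destruct (Nat.eqb_spec (kn + (1 + i)) kn); [lia|auto]. }
      simpl rsum. rewrite Nat.add_0_r. rewrite Nat.ltb_irrefl, Nat.eqb_refl.
      rewrite !rsum_const. unfold r. ring.
  - unfold objective. rewrite rsum_plus.
    rewrite (rsum_split' _ cn M HMc).
    rewrite (rsum_ext _ (fun _ => 0) cn) by (intros i Hi; destruct (Nat.ltb_spec i cn); [rewrite plogp0; ring|lia]).
    rewrite (rsum_ext (fun i => _) (fun _ => - plogp (1 / N)) (M - cn)) by (intros i Hi; destruct (Nat.ltb_spec (cn + i) cn); lia || auto).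
    assert (Hkm : (kn <= M)%nat) by lia.
    rewrite (rsum_split' _ kn M Hkm).
    rewrite (rsum_split' _ 1 (M - kn)) by lia.
    rewrite (rsum_ext _ (fun _ => plogp alpha) kn) by (intros i Hi; destruct (Nat.ltb_spec i kn); lia || auto).
    rewrite (rsum_ext (fun i => _) (fun _ => 0) (M - kn - 1)).
    2:{ intros i Hi. destruct (Nat.ltb_spec (kn + (1 + i)) kn); [lia|].
        destruct (Nat.eqb_spec (kn + (1 + i)) kn); [lia|apply plogp0]. }
    simpl rsum. rewrite Nat.add_0_r. rewrite Nat.ltb_irrefl, Nat.eqb_refl.
    rewrite !rsum_const. fold N. rewrite (plogp_pos alpha) by lra.
    rewrite plogp_pos by lra. unfold Rdiv. rewrite Rmult_1_l, ln_Rinv by lra.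
    field. lra.
Qed.
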